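(* Let $t,k\ge1$ with $k\le t/6$ and let $F$ be a $[t,k]$-interval system. Then there exists a randomized $[t,k]$-interval system $\mathcal{F}$ such that (1) $\mathrm{Sets}(\mathcal{F})=\mathrm{Sets}(F)$; (2) $\mathrm{val}(\mathcal{F})\le5\,\mathrm{val}(F)$; (3) $\mathcal{F}$ is valid.
   Context: An interval is a nonempty set $\{a,\ldots,b\}$ of integers; a $[t,k]$-interval system is a set of $k$ pairwise disjoint intervals contained in $[t]$; a randomized one is a distribution over such systems. $\mathrm{val}(F)=\sum_{I\in F}1/|I|$, $\mathrm{val}(\mathcal{F})=\mathbb{E}_{F\sim\mathcal{F}}\mathrm{val}(F)$. $\mathrm{Sets}(F)$ is the distribution of the set obtained by choosing independently a uniform element from each interval of $F$; $\mathrm{Sets}(\mathcal{F})$ samples $F\sim\mathcal{F}$ then a set from $\mathrm{Sets}(F)$. A $[t]$-interval system $F$ is valid if $\sum_{I\in F}|I|\le t/2$; a randomized one is valid if every system in its support is valid. *)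

(* Defs.v *)
(* Points of [t] are represented by 'I_t = {0,...,t-1}. *)
From HB Require Import structures.
From mathcomp Require Import all_boot all_order all_algebra.
From mathcomp Require Import reals.
Set Implicit Arguments. Unset Strict Implicit. Unset Printing Implicit Defensive.
Import Order.TTheory GRing.Theory Num.Theory.
Local Open Scope ring_scope.

Section IntervalSystems.
Variable t : nat.

Definition is_interval (I : {set 'I_t}) : bool :=
  [exists a : 'I_t, exists b : 'I_t,
     ((a <= b)%N) && (I == [set i : 'I_t | (a <= i <= b)%N])].

Definition is_system (k : nat) (F : {set {set 'I_t}}) : bool :=
  [&& [forall I in F, is_interval I],
      [forall I in F, forall J in F, (I != J) ==> [disjoint I & J]]
    & #|F| == k].

Variable R : realType.

Definition sys_val (F : {set {set 'I_t}}) : R := \sum_(I in F) (#|I|%:R)^-1.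

Definition valid (F : {set {set 'I_t}}) : bool := (2 * \sum_(I in F) #|I| <= t)%N.

Definition choice_fn (F : {set {set 'I_t}}) (c : {ffun {set 'I_t} -> option 'I_t}) : bool :=
  [forall I, if I \in F then (if c I is Some x then x \in I else false)
             else c I == None].

Definition choice_set (F : {set {set 'I_t}}) (c : {ffun {set 'I_t} -> option 'I_t})
  : {set 'I_t} := [set x | [exists I in F, c I == Some x]].

(* Sets(F): probability of the set S when choosing independently a uniform
   element from each interval of F *)
Definition Sets (F : {set {set 'I_t}}) (S : {set 'I_t}) : R :=
  \sum_(c : {ffun {set 'I_t} -> option 'I_t} | choice_fn F c)
     (\prod_(I in F) (#|I|%:R)^-1) * (S == choice_set F c)%:R.

(* randomized [t,k]-interval system: a probability distribution over
   [t,k]-interval systems (a finite type, so a weight function) *)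
Definition is_rand_system (k : nat) (mu : {ffun {set {set 'I_t}} -> R}) : Prop :=
  (forall F, 0 <= mu F) /\ (\sum_F mu F = 1) /\
  (forall F, mu F != 0 -> is_system k F).

Definition rval (mu : {ffun {set {set 'I_t}} -> R}) : R := \sum_F mu F * sys_val F.

Definition rSets (mu : {ffun {set {set 'I_t}} -> R}) (S : {set 'I_t}) : R :=
  \sum_F mu F * Sets F S.

Definition rvalid (mu : {ffun {set {set 'I_t}} -> R}) : Prop :=
  forall F, mu F != 0 -> valid F.

End IntervalSystems.

(* Main.v *)
Require Import Defs.
From HB Require Import structures.
From mathcomp Require Import all_boot all_order all_algebra.
From mathcomp Require Import reals.
From mathcomp Require Import zify ring lra.
Import Order.TTheory GRing.Theory Num.Theory.
Set Implicit Arguments. Unset Strict Implicit. Unset Printing Implicit Defensive.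

Section Pieces.
Variable t : nat.
Implicit Types (I J : {set 'I_t}).

Definition convex I := forall x y i : 'I_t, x \in I -> y \in I -> (x <= i <= y)%N -> i \in I.

Lemma interval_convex I : is_interval I -> convex I.
Proof.
case/existsP=> a /existsP [b /andP [_ /eqP ->]] x y i; rewrite !inE.
move=> /andP[ax _] /andP[_ yb] /andP[xi iy]; apply/andP; split.
  exact: leq_trans ax xi.
exact: leq_trans iy yb.
Qed.

Lemma interval_n0 I : is_interval I -> I != set0.
Proof.
case/existsP=> a /existsP [b /andP [ab /eqP ->]]; apply/set0Pn; exists a.
by rewrite inE leqnn ab.
Qed.

Lemma convex_interval I x0 : x0 \in I -> convex I -> is_interval I.
Proof.
move=> x0I cI.
case: (@arg_minnP _ x0 (fun i => i \in I) (fun i : 'I_t => nat_of_ord i) x0I) => a aI amin.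
case: (@arg_maxnP _ x0 (fun i => i \in I) (fun i : 'I_t => nat_of_ord i) x0I) => b bI bmax.
apply/existsP; exists a; apply/existsP; exists b.
rewrite (amin _ bI) /=; apply/eqP/setP => i; rewrite inE.
apply/idP/idP => [iI|]; first by rewrite amin //=; exact: bmax.
exact: cI.
Qed.

Definition rk I (i : 'I_t) := #|[set j in I | (j < i)%N]|.
Definition msz I := (#|I| %/ 4).+1.
Definition piece I (q : nat) := [set i in I | (rk I i %/ msz I == q)%N].
Definition pieces I := [set piece I q | q : 'I_4] :\ set0.

Lemma rk_mono I (x y : 'I_t) : (x <= y)%N -> (rk I x <= rk I y)%N.
Proof.
move=> xy; apply: subset_leq_card; apply/subsetP=> j; rewrite !inE.
by case/andP=> -> jx; exact: leq_trans jx xy.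
Qed.

Lemma rk_strict I (x y : 'I_t) : x \in I -> (x < y)%N -> (rk I x < rk I y)%N.
Proof.
move=> xI xy; apply: proper_card; apply/properP; split.
  apply/subsetP=> j; rewrite !inE => /andP[-> jx]; exact: ltn_trans jx xy.
by exists x; rewrite !inE ?xI ?xy ?ltnn.
Qed.

Lemma rk_inj I : {in I &, injective (rk I)}.
Proof.
move=> x y xI yI e; apply/eqP; rewrite -val_eqE /=; case: ltngtP => // h.
  by have := rk_strict xI h; rewrite e ltnn.
by have := rk_strict yI h; rewrite e ltnn.
Qed.

Lemma rk_lt I x : x \in I -> (rk I x < #|I|)%N.
Proof.
move=> xI; apply: proper_card; apply/properP; split.
  by apply/subsetP=> j; rewrite inE => /andP[].
by exists x; rewrite // inE ltnn andbF.
Qed.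

Lemma piece_sub I q : piece I q \subset I.
Proof. by apply/subsetP=> i; rewrite inE => /andP[]. Qed.

Lemma piece_card I q : (#|piece I q| <= msz I)%N.
Proof.
pose g (i : 'I_t) : 'I_(msz I) := inord (rk I i %% msz I).
rewrite -(card_in_imset (f := g)).
  by rewrite -[X in (_ <= X)%N]card_ord max_card.
move=> x y; rewrite !inE => /andP[xI /eqP qx] /andP[yI /eqP qy] /(congr1 val).
rewrite /g /= !inordK ?ltn_mod // => e.
apply: (rk_inj xI yI).
by rewrite (divn_eq (rk I x) (msz I)) (divn_eq (rk I y) (msz I)) qx qy e.
Qed.

Lemma piece_convex I q : is_interval I -> convex (piece I q).
Proof.
move=> /interval_convex cI x y i; rewrite !inE => /andP[xI /eqP qx] /andP[yI /eqP qy] xiy.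
case/andP: (xiy) => xi iy.
rewrite (cI x y i) //=; rewrite eqn_leq; apply/andP; split.
  by rewrite -qy; apply: leq_div2r; exact: rk_mono.
by rewrite -qx; apply: leq_div2r; exact: rk_mono.
Qed.

Lemma pieces_partition I : partition (pieces I) I.
Proof.
apply/and3P; split.
- apply/eqP/setP=> x; apply/bigcupP/idP => [[J]|xI].
    rewrite !inE => /andP[_ /imsetP[q _ ->]]; exact: (subsetP (piece_sub I q)).
  have qlt : (rk I x %/ msz I < 4)%N.
    rewrite ltn_divLR //; apply: (leq_trans (rk_lt xI)); rewrite /msz; lia.
  exists (piece I (Ordinal qlt)); last by rewrite inE xI /=.
  rewrite !inE; apply/andP; split; last by apply/imsetP; exists (Ordinal qlt).
  by apply/set0Pn; exists x; rewrite inE xI /=.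
- apply/trivIsetP => A B; rewrite !inE => /andP[_ /imsetP[q _ ->]] /andP[_ /imsetP[q' _ ->]] ne.
  rewrite -setI_eq0; apply/eqP/setP => x; rewrite !inE; apply/negbTE/negP.
  case/andP => /andP[_ /eqP e1] /andP[_ /eqP e2].
  have qq : q = q' by apply/val_inj; rewrite /= -e1 -e2.
  by rewrite qq eqxx in ne.
- by rewrite !inE eqxx.
Qed.

Lemma pieces_sub I J : J \in pieces I -> J \subset I /\ J != set0.
Proof. rewrite !inE => /andP[ne /imsetP[q _ eJ]]. rewrite eJ in ne *. split => //. exact: (piece_sub I q). Qed.

Lemma pieces_interval I J : is_interval I -> J \in pieces I -> is_interval J.
Proof.
move=> iI; rewrite !inE => /andP[/set0Pn[x xJ] /imsetP[q _ eJ]].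
by apply: (convex_interval xJ); rewrite eJ; apply: piece_convex.
Qed.

Lemma pieces_card I J : J \in pieces I -> (#|J| <= msz I)%N.
Proof. by rewrite !inE => /andP[_ /imsetP[q _ ->]]; apply: piece_card. Qed.

Lemma pieces_num I : (#|pieces I| <= 4)%N.
Proof.
apply: leq_trans (subset_leq_card (subsetDl _ _)) _.
by apply: leq_trans (leq_imset_card _ _) _; rewrite card_ord.
Qed.

End Pieces.
Section SetsChar.
Variable t : nat.
Variable R : realType.
Local Open Scope ring_scope.
Implicit Types (G : {set {set 'I_t}}) (S : {set 'I_t}).

Definition transv G S := (S \subset cover G) && [forall J in G, #|S :&: J| == 1%N].

Lemma choice_fnP G c : choice_fn G c ->
  forall J, if J \in G then exists2 x, c J = Some x & x \in J else c J = None.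
Proof.
move/forallP=> h J; move: (h J); case: (J \in G).
  by case: (c J) => // x xJ; exists x.
by move/eqP.
Qed.

Definition c0 G S : {ffun {set 'I_t} -> option 'I_t} :=
  [ffun J => if J \in G then [pick x in S :&: J] else None].

Lemma c0E G S J y : J \in G -> S :&: J = [set y] -> c0 G S J = Some y.
Proof.
move=> JG e; rewrite ffunE JG; case: pickP => [z|/(_ y)].
  by rewrite e inE => /eqP ->.
by rewrite e inE eqxx.
Qed.

Lemma transv_c0 G S : transv G S -> forall J, J \in G -> exists y, S :&: J = [set y].
Proof. by case/andP=> _ /forallP h J JG; move: (h J); rewrite JG /= => /cards1P. Qed.

Lemma good_transv G c : trivIset G -> choice_fn G c -> transv G (choice_set G c).
Proof.
move=> tG cf; have cP := choice_fnP cf.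
apply/andP; split.
  apply/subsetP=> x; rewrite inE => /existsP[J /andP[JG /eqP cJ]].
  move: (cP J); rewrite JG => -[y]; rewrite cJ => -[<-] xJ.
  by apply/bigcupP; exists J.
apply/forallP=> J; apply/implyP=> JG; apply/cards1P.
move: (cP J); rewrite JG => -[x cJ xJ]; exists x; apply/setP=> y; rewrite !inE.
apply/andP/eqP => [[/existsP[J' /andP[J'G /eqP cJ']] yJ]|->].
  move: (cP J'); rewrite J'G => -[z]; rewrite cJ' => -[<-] yJ'.
  have JJ : J' = J.
    apply/eqP; apply: contraTT yJ => ne.
    by rewrite (disjointFr (trivIsetP tG _ _ J'G JG ne) yJ').
  by move: cJ'; rewrite JJ cJ => -[].
split => //; apply/existsP; exists J; by rewrite JG cJ /=.
Qed.

Lemma c0_unique G S c : transv G S -> choice_fn G c -> S = choice_set G c -> c = c0 G S.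
Proof.
move=> tr cf eS; have cP := choice_fnP cf; apply/ffunP=> J.
move: (cP J); case JG: (J \in G); last by move=> cJ; rewrite cJ ffunE JG.
case=> x cJ xJ.
have [y ey] := transv_c0 tr JG.
rewrite cJ (c0E JG ey); congr Some; apply/set1P; rewrite -ey inE xJ andbT.
by rewrite {1}eS inE; apply/existsP; exists J; rewrite JG cJ /=.
Qed.

Lemma c0_good G S : transv G S -> choice_fn G (c0 G S) && (S == choice_set G (c0 G S)).
Proof.
move=> tr; apply/andP; split.
  apply/forallP=> J; case JG: (J \in G); last by rewrite ffunE JG.
  have [y ey] := transv_c0 tr JG; rewrite (c0E JG ey) /=.
  have : y \in S :&: J by rewrite ey set11.
  by rewrite inE => /andP[].
apply/eqP/setP => x; rewrite inE; apply/idP/existsP.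
  move=> xS; case/andP: (tr) => /subsetP sub _; case/bigcupP: (sub x xS) => J JG xJ.
  have [y ey] := transv_c0 tr JG.
  exists J; rewrite JG (c0E JG ey) /=.
  have : x \in S :&: J by rewrite inE xS xJ.
  by rewrite ey inE => /eqP ->.
case=> J /andP[JG /eqP cJ]; have [y ey] := transv_c0 tr JG.
rewrite (c0E JG ey) in cJ; case: cJ => <-.
have : y \in S :&: J by rewrite ey set11.
by rewrite inE => /andP[].
Qed.

Lemma SetsE G S : trivIset G ->
  Sets R G S = (\prod_(J in G) (#|J|%:R)^-1) * (transv G S)%:R.
Proof.
move=> tG; rewrite /Sets -big_distrr /=; congr (_ * _).
rewrite (bigID (fun c => S == choice_set G c)) /= [X in _ + X]big1 ?addr0; last first.
  by move=> c /andP[_ /negbTE ->].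
have [tr|ntr] := boolP (transv G S).
  rewrite (eq_bigl (fun c => c == c0 G S)) ?big_pred1_eq.
    by case/andP: (c0_good tr) => _ ->.
  move=> c; apply/idP/eqP => [/andP[cf /eqP eS]|->]; first exact: c0_unique.
  exact: c0_good.
rewrite big_pred0 // => c; apply/negbTE/negP => /andP[cf /eqP eS].
by move: ntr; rewrite eS good_transv.
Qed.

End SetsChar.
Section Main.
Variable t : nat.
Variable R : realType.
Variable F : {set {set 'I_t}}.
Local Open Scope ring_scope.

Definition famA := pfamily set0 F (@pieces t).
Definition w (f : {ffun {set 'I_t} -> {set 'I_t}}) : R :=
  \prod_(I in F) (#|f I|%:R / #|I|%:R).
Definition mu : {ffun {set {set 'I_t}} -> R} :=
  [ffun G => \sum_(f in famA | f @: F == G) w f].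

Hypothesis HFi : forall I, I \in F -> is_interval I.
Hypothesis HtF : trivIset F.

Lemma famAP f : f \in famA -> forall I, I \in F -> f I \in pieces I.
Proof. by case/pfamilyP => _ h I IF; apply: h. Qed.

Lemma fsub f : f \in famA -> forall I, I \in F -> f I \subset I /\ f I != set0.
Proof. move=> fA I IF; exact: pieces_sub (famAP fA IF). Qed.

Lemma finj f : f \in famA -> {in F &, injective f}.
Proof.
move=> fA I I' IF I'F e.
have [s1 n1] := fsub fA IF; have [s2 _] := fsub fA I'F.
case/set0Pn: n1 => x xf.
have xI : x \in I := subsetP s1 x xf.
have xI' : x \in I' by apply: (subsetP s2); rewrite -e.
apply/eqP; apply: contraTT xI' => ne.
by rewrite (disjointFr (trivIsetP HtF _ _ IF I'F ne) xI).
Qed.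

Lemma ftriv f : f \in famA -> trivIset (f @: F).
Proof.
move=> fA; apply/trivIsetP => _ _ /imsetP[I IF ->] /imsetP[I' I'F ->] ne.
have ne' : I != I' by apply: contraNneq ne => ->.
have [s1 _] := fsub fA IF; have [s2 _] := fsub fA I'F.
exact: disjointW s1 s2 (trivIsetP HtF _ _ IF I'F ne').
Qed.

Lemma sys_img k f : #|F| = k -> f \in famA -> is_system k (f @: F).
Proof.
move=> cF fA; apply/and3P; split.
- apply/forallP=> J; apply/implyP => /imsetP[I IF ->].
  exact: pieces_interval (HFi IF) (famAP fA IF).
- apply/forallP=> J; apply/implyP=> JF; apply/forallP=> J'; apply/implyP=> J'F.
  apply/implyP=> ne; exact: (trivIsetP (ftriv fA)).
- by rewrite card_in_imset ?cF //; apply: finj.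
Qed.

Lemma sum_mu (h : {set {set 'I_t}} -> R) :
  \sum_G mu G * h G = \sum_(f in famA) w f * h (f @: F).
Proof.
symmetry; rewrite (partition_big (fun f : {ffun {set 'I_t} -> {set 'I_t}} => f @: F) predT) //=.
apply: eq_bigr => G _; rewrite ffunE big_distrl /=.
by apply: eq_bigr => f /andP[_ /eqP ->].
Qed.

Lemma distr (g : {set 'I_t} -> {set 'I_t} -> R) :
  \sum_(f in famA) \prod_(I in F) g I (f I) = \prod_(I in F) \sum_(J in pieces I) g I J.
Proof. by rewrite (big_distr_big_dep set0). Qed.

Lemma cardF_gt0 (I : {set 'I_t}) : I \in F -> (0 < #|I|)%N.
Proof. by move=> IF; rewrite card_gt0 interval_n0 // HFi. Qed.

Lemma pieces_gt0 (I J : {set 'I_t}) : J \in pieces I -> (0 < #|J|)%N.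
Proof. by move=> /pieces_sub[_]; rewrite card_gt0. Qed.

Lemma mass1 (I : {set 'I_t}) : I \in F -> \sum_(J in pieces I) (#|J|%:R / #|I|%:R : R) = 1.
Proof.
move=> IF; rewrite -mulr_suml -natr_sum -(card_partition (pieces_partition I)).
by rewrite divff // pnatr_eq0 -lt0n cardF_gt0.
Qed.

Lemma mu_sum1 : \sum_G mu G = 1.
Proof.
rewrite -(eq_bigr _ (fun G _ => mulr1 (mu G))) (sum_mu (fun=> 1)).
rewrite (eq_bigr (fun f : {ffun {set 'I_t} -> {set 'I_t}} => \prod_(I in F) (#|f I|%:R / #|I|%:R))) => [|f _]; last by rewrite mulr1.
by rewrite (distr (fun I J => #|J|%:R / #|I|%:R)) big1 // => I IF; apply: mass1.
Qed.

Lemma marg (I0 : {set 'I_t}) : I0 \in F ->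
  \sum_(f in famA) w f * (#|f I0|%:R)^-1 = #|pieces I0|%:R / #|I0|%:R.
Proof.
move=> I0F.
pose g' (I J : {set 'I_t}) : R := #|J|%:R / #|I|%:R * (if I == I0 then (#|J|%:R)^-1 else 1).
transitivity (\sum_(f in famA) \prod_(I in F) g' I (f I)).
  apply: eq_bigr => f fA; rewrite /w (bigD1 I0) //= [in RHS](bigD1 I0) //= /g' eqxx.
  rewrite [in RHS](eq_bigr (fun I => #|f I|%:R / #|I|%:R)); first by rewrite mulrAC.
  by move=> I /andP[_ /negbTE ->]; rewrite mulr1.
rewrite (distr g') (bigD1 I0) //= [X in _ * X]big1 ?mulr1; last first.
  move=> I /andP[IF /negbTE nI]; rewrite /g' nI.
  under eq_bigr do rewrite mulr1.
  exact: mass1.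
rewrite /g' eqxx (eq_bigr (fun _ => (#|I0|%:R)^-1)).
  by rewrite sumr_const mulr_natl.
move=> J JP; rewrite mulrAC divff ?mul1r //.
by rewrite pnatr_eq0 -lt0n (pieces_gt0 JP).
Qed.

Lemma rval_le : rval mu <= 4 * sys_val R F.
Proof.
rewrite /rval sum_mu.
rewrite (eq_bigr (fun f : {ffun {set 'I_t} -> {set 'I_t}} => \sum_(I in F) w f * (#|f I|%:R)^-1)) => [|f fA]; last first.
  by rewrite /sys_val big_imset /= ?big_distrr //; apply: finj.
rewrite exchange_big /= /sys_val big_distrr /=; apply: ler_sum => I IF.
rewrite marg // ler_wpM2r ?invr_ge0 ?ler0n //.
by rewrite (ler_nat R _ 4) pieces_num.
Qed.

Definition cond (S I J : {set 'I_t}) := (#|S :&: I| == 1%N) && (S :&: I \subset J).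

Lemma transv_img f (S : {set 'I_t}) : f \in famA ->
  transv (f @: F) S = (S \subset cover F) && [forall I in F, cond S I (f I)].
Proof.
move=> fA.
have key : forall I, I \in F -> S :&: I \subset f I -> S :&: f I = S :&: I.
  move=> I IF sub; apply/eqP; rewrite eqEsubset setIS ?subsetI ?subsetIl ?sub //.
  exact: (fsub fA IF).1.
apply/andP/andP => [[cov /forallP h]|[cov /forallP h]].
- have cov' : forall x, x \in S -> exists2 I, I \in F & x \in f I.
    move/subsetP: cov => cov x xS; case/bigcupP: (cov x xS) => J /imsetP[I IF ->] xf.
    by exists I.
  split.
    apply/subsetP=> x xS; case: (cov' x xS) => I IF xf; apply/bigcupP; exists I => //.
    exact: (subsetP (fsub fA IF).1 x xf).
  apply/forallP=> I; apply/implyP=> IF.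
  have e : S :&: I = S :&: f I.
    apply/setP=> x; rewrite !inE; apply/andP/andP => [[xS xI]|[xS xf]]; split => //.
      case: (cov' x xS) => I' I'F xf'.
      have II : I' = I.
        apply/eqP; apply: contraTT xI => ne.
        by rewrite (disjointFr (trivIsetP HtF _ _ I'F IF ne) (subsetP (fsub fA I'F).1 x xf')).
      by rewrite -II.
    exact: (subsetP (fsub fA IF).1 x xf).
  move: (h (f I)); rewrite imset_f //= => c1.
  by rewrite /cond e c1 subsetIr.
- split.
    apply/subsetP=> x xS; case/bigcupP: (subsetP cov x xS) => I IF xI.
    move: (h I); rewrite IF /= => /andP[_ sub].
    apply/bigcupP; exists (f I); first exact: imset_f.
    by apply: (subsetP sub); rewrite inE xS xI.
  apply/forallP=> J; apply/implyP=> /imsetP[I IF ->].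
  move: (h I); rewrite IF /= => /andP[c1 sub].
  by rewrite key.
Qed.

Lemma prod_bool (T : finType) (D : {set T}) (P : pred T) :
  \prod_(i in D) ((P i)%:R : R) = ([forall i in D, P i])%:R.
Proof.
have [h|] := boolP [forall i in D, P i].
  by rewrite big1 // => i iD; move/forallP/(_ i): h; rewrite iD /= => ->.
rewrite negb_forall => /existsP[i]; rewrite negb_imply => /andP[iD /negbTE Pi].
by rewrite (bigD1 i) //= Pi mul0r.
Qed.

Lemma count1 (S I : {set 'I_t}) :
  \sum_(J in pieces I) ((cond S I J)%:R : R) = (#|S :&: I| == 1%N)%:R.
Proof.
have [/cards1P[x ex]|n1] := boolP (#|S :&: I| == 1%N); last first.
  by rewrite big1 // => J _; rewrite /cond (negbTE n1).
have xI : x \in I.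
  have : x \in S :&: I by rewrite ex set11.
  by rewrite inE => /andP[].
have cv : x \in cover (pieces I).
  by case/and3P: (pieces_partition I) => /eqP -> _ _.
have tr : trivIset (pieces I) by case/and3P: (pieces_partition I).
rewrite (bigD1 (pblock (pieces I) x)) ?pblock_mem //= /cond ex cards1 eqxx sub1set mem_pblock cv /=.
rewrite big1 ?addr0 // => J /andP[JP ne]; rewrite sub1set /=.
case xJ: (x \in J) => //=.
by rewrite (def_pblock tr JP xJ) eqxx in ne.
Qed.

Lemma rSets_eq (S : {set 'I_t}) : rSets mu S = Sets R F S.
Proof.
rewrite /rSets sum_mu (SetsE _ _ HtF).
rewrite (eq_bigr (fun f : {ffun {set 'I_t} -> {set 'I_t}} => (S \subset cover F)%:R *
   \prod_(I in F) ((#|I|%:R)^-1 * (cond S I (f I))%:R))) => [|f fA]; last first.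
  rewrite (SetsE _ _ (ftriv fA)) transv_img // -mulnb natrM.
  rewrite -(prod_bool F (fun I => cond S I (f I))) big_split /=.
  rewrite big_imset /=; last exact: finj.
  have e : w f * \prod_(I in F) (#|f I|%:R)^-1 = \prod_(I in F) (#|I|%:R)^-1.
    rewrite /w -big_split /=; apply: eq_bigr => I IF.
    rewrite mulrAC divff ?mul1r // pnatr_eq0 -lt0n.
    exact: (pieces_gt0 (famAP fA IF)).
  by rewrite -e; ring.
rewrite -big_distrr /= (distr (fun I J : {set 'I_t} => (#|I|%:R)^-1 * (cond S I J)%:R)).
rewrite (eq_bigr (fun I : {set 'I_t} => (#|I|%:R)^-1 * (#|S :&: I| == 1%N)%:R)) => [|I _]; last first.
  by rewrite -big_distrr /= count1.
rewrite big_split /= prod_bool /transv -mulnb natrM.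
by rewrite mulrCA.
Qed.

Lemma mu_supp G : mu G != 0 -> exists2 f, f \in famA & G = f @: F.
Proof.
rewrite ffunE; case: (pickP [pred f : {ffun {set 'I_t} -> {set 'I_t}} | (f \in famA) && (f @: F == G)]) => [f /andP[fA /eqP <-]|none]; first by exists f.
by rewrite big_pred0 ?eqxx // => f; exact: none.
Qed.

Lemma valid_img k f : (6 * k <= t)%N -> #|F| = k -> f \in famA -> valid (f @: F).
Proof.
move=> tk cF fA; rewrite /valid big_imset /=; last exact: finj.
have h1 : (\sum_(I in F) #|f I| <= \sum_(I in F) (#|I| %/ 4 + 1))%N.
  by apply: leq_sum => I IF; rewrite addn1; apply: pieces_card; apply: famAP.
have h3 : (\sum_(I in F) #|I| <= t)%N.
  rewrite (eqP HtF); apply: leq_trans (max_card _) _; by rewrite card_ord.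
have h2 : (4 * \sum_(I in F) (#|I| %/ 4) <= \sum_(I in F) #|I|)%N.
  rewrite big_distrr /=.
  by apply: leq_sum => I _; rewrite mulnC leq_trunc_div.
rewrite big_split /= sum1_card cF in h1.
have h4 := leq_trans h2 h3; clear h2 h3; move: h4 h1.
set A := (\sum_(I in F) #|f I|)%N; set X := (\sum_(I in F) (#|I| %/ 4))%N.
clearbody A X; lia.
Qed.

End Main.


Local Open Scope ring_scope.

Theorem mainTheorem14 (R : realType) (t k : nat) :
  (1 <= t)%N -> (1 <= k)%N -> (6 * k <= t)%N ->
  forall F : {set {set 'I_t}}, is_system k F ->
  exists mu : {ffun {set {set 'I_t}} -> R},
    is_rand_system k mu /\
    (forall S : {set 'I_t}, rSets mu S = Sets R F S) /\
    rval mu <= 5 * sys_val R F /\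
    rvalid mu.
Proof.
move=> _ _ tk F HF.
have HFi : forall I, I \in F -> is_interval I.
  by case/and3P: HF => /forallP h _ _ I IF; move: (h I); rewrite IF.
have HtF : trivIset F.
  case/and3P: HF => _ /forallP h _; apply/trivIsetP => I J IF JF ne.
  by move: (h I); rewrite IF /= => /forallP/(_ J); rewrite JF ne.
have cF : #|F| = k by case/and3P: HF => _ _ /eqP.
exists (mu R F); split; [split; [|split]|split; [|split]].
- move=> G; rewrite ffunE; apply: sumr_ge0 => f _; apply: prodr_ge0 => I _.
  by rewrite divr_ge0 ?ler0n.
- exact: mu_sum1.
- move=> G /mu_supp[f fA ->]; exact: sys_img.
- exact: rSets_eq.
- have h := rval_le R HFi HtF.
  have h0 : 0 <= sys_val R F.
    by apply: sumr_ge0 => I _; rewrite invr_ge0 ler0n.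
  lra.
- move=> G /mu_supp[f fA ->]; exact: (valid_img HtF tk cF fA).
Qed.
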